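(* Let $L$ be an infinite set and let $Q$ be either the edgeless cube $Q_L$ or the edged cube $\bar Q_L$. The quotient $\mathrm{UC}_L=\mathrm{uc}_L/{\sim}$, with the operation induced by concatenation, is a group containing $G_L$ (the finite basic sequences modulo $\sim$) as a subgroup. Furthermore, every element of $\mathrm{UC}_L$ has order at most $\operatorname{lcm}\{\text{order of }\pi:\pi\in S_{24}\}$.
   Context: Let $L$ be an infinite set, $-L=\{-r:r\in L\}$ a disjoint copy of $L$, and $0$ a new element; $L^\dagger=-L\cup\{0\}\cup L$ with $-(-r)=r$, $-0=0$. Adjoin $\pm\infty$ with $-(+\infty)=-\infty$ and set $\bar L^\dagger=L^\dagger\cup\{\pm\infty\}$. Points of $U=(\bar L^\dagger)^3$ have coordinates $x,y,z$. The edgeless cube $Q_L$ is the set of points of $U$ with exactly one coordinate in $\{\pm\infty\}$ (cells). The edged cube $\bar Q_L$ is the set of cells $(p,i)$ with $p\in U$, $i\in\{x,y,z\}$, $p_i\in\{\pm\infty\}$ ($i$ marks the face). For $i\in\{x,y,z\}$, $\alpha\in\bar L^\dagger$, the quarter-turn twist $T_{i,\alpha}$ is the permutation of cells fixing every cell whose point $p$ has $p_i\ne\alpha$ and acting on the others by $T_{x,\alpha}(\alpha,y,z)=(\alpha,-z,y)$, $T_{y,\alpha}(x,\alpha,z)=(z,\alpha,-x)$, $T_{z,\alpha}(x,y,\alpha)=(-y,x,\alpha)$ (in $\bar Q_L$ the marked coordinate is carried along by the rotation). Basic twists are $T,T^2,T^3$ for quarter-turn twists $T$. A basic sequence is a sequence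 $\langle\sigma_\eta:\eta<\theta\rangle$ of basic twists of ordinal length $\theta$. A labelling is a map $f$ from cells to $X\cup\{\mathrm{NaC}\}$ for a set $X\not\ni\mathrm{NaC}$; it is legal if it never takes value NaC; a configuration is a labelling with $X$ the six colors red, white, green, orange, yellow, blue. A twist $\sigma$ acts by $(\sigma f)(c)=f(\sigma^{-1}c)$. Applying $\vec\sigma=\langle\sigma_\eta:\eta<\theta\rangle$ to $f_0$ produces $f_{\eta+1}=\sigma_\eta f_\eta$, and for limit $\lambda\le\theta$, $f_\lambda(c)$ is the eventually constant value of $f_\eta(c)$ ($\eta<\lambda$) if it exists and NaC otherwise; the terminal labelling is $\vec\sigma f_0$. $\vec\sigma$ is universally convergent if $\vec\sigma\,\mathrm{id}$ is legal, where $\mathrm{id}$ labels each cell by itself. $\vec\sigma\sim\vec\tau$ means $\vec\sigma f=\vec\tau f$ for every configuration $f$. $\mathrm{uc}_L$ is the set of universally convergent basic sequences with concatenation ($\vec\tau\vec\sigma$ means $\vec\sigma$ followed by $\vec\tau$), and $G_L$ is the set of finite basic sequences modulo $\sim$. *)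

(* Defs.v *)
From Stdlib Require Import ClassicalEpsilon.
From mathcomp Require Import all_boot all_fingroup.
From mathcomp Require Import zify.

Set Implicit Arguments.
Unset Strict Implicit.
Unset Printing Implicit Defensive.

Definition infinite_type (L : Type) : Prop :=
  forall l : list L, exists x : L, ~ List.In x l.

(* bar L^dagger = -L ∪ {0} ∪ L ∪ {±oo} *)
Inductive coord (L : Type) : Type :=
| CPos of L
| CNeg of L
| CZero
| CPinf
| CMinf.
Arguments CZero {L}.
Arguments CPinf {L}.
Arguments CMinf {L}.

Definition cneg (L : Type) (c : coord L) : coord L :=
  match c with
  | CPos r => CNeg r | CNeg r => CPos r | CZero => CZero
  | CPinf => CMinf | CMinf => CPinf
  end.

Definition isinf (L : Type) (c : coord L) : bool :=
  match c with CPinf | CMinf => true | _ => false end.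

Lemma isinf_neg (L : Type) (c : coord L) : isinf (cneg c) = isinf c.
Proof. by case: c. Qed.

Record point (L : Type) := Pt { px : coord L; py : coord L; pz : coord L }.

Inductive axis := AX | AY | AZ.

Definition getc (L : Type) (p : point L) (i : axis) : coord L :=
  match i with AX => px p | AY => py p | AZ => pz p end.

Definition rot (L : Type) (i : axis) (p : point L) : point L :=
  match i with
  | AX => Pt (px p) (cneg (pz p)) (py p)
  | AY => Pt (pz p) (py p) (cneg (px p))
  | AZ => Pt (cneg (py p)) (px p) (pz p)
  end.

(* the marked coordinate carried along by the rotation *)
Definition rotmark (i j : axis) : axis :=
  match i, j with
  | AX, AY => AZ | AX, AZ => AY
  | AY, AX => AZ | AY, AZ => AX
  | AZ, AX => AY | AZ, AY => AX
  | _, j => j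
  end.

Definition qturn_pt (L : Type) (i : axis) (a : coord L) (p : point L) : point L :=
  if excluded_middle_informative (getc p i = a) then rot i p else p.

Definition qturn_pm (L : Type) (i : axis) (a : coord L) (pm : point L * axis)
  : point L * axis :=
  if excluded_middle_informative (getc pm.1 i = a)
  then (rot i pm.1, rotmark i pm.2) else pm.

Definition ninf (L : Type) (p : point L) : nat :=
  isinf (px p) + isinf (py p) + isinf (pz p).

Definition onecell (L : Type) (p : point L) : bool := ninf p == 1.

Lemma ninf_rot (L : Type) i (p : point L) : ninf (rot i p) = ninf p.
Proof. case: i; rewrite /ninf /= !isinf_neg; lia. Qed.

Lemma onecell_qturn (L : Type) i (a : coord L) p :
  onecell p -> onecell (qturn_pt i a p).
Proof.
rewrite /qturn_pt; destruct (excluded_middle_informative _) => //.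
by rewrite /onecell ninf_rot.
Qed.

Lemma getc_rotmark (L : Type) i j (p : point L) :
  isinf (getc (rot i p) (rotmark i j)) = isinf (getc p j).
Proof. by case: i; case: j; rewrite /= ?isinf_neg. Qed.

Lemma dcell_qturn (L : Type) i (a : coord L) (pm : point L * axis) :
  isinf (getc pm.1 pm.2) ->
  isinf (getc (qturn_pm i a pm).1 (qturn_pm i a pm).2).
Proof.
rewrite /qturn_pm; destruct (excluded_middle_informative _) => //.
by rewrite /= getc_rotmark.
Qed.

Definition ecell (L : Type) := {p : point L | onecell p}.
Definition dcell (L : Type) := {pm : point L * axis | isinf (getc pm.1 pm.2)}.

Inductive cubekind := Edgeless | Edged.

Definition cell (L : Type) (k : cubekind) : Type :=
  match k with Edgeless => ecell L | Edged => dcell L end.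

Definition qturn_ecell (L : Type) i (a : coord L) (c : ecell L) : ecell L :=
  exist _ (qturn_pt i a (sval c)) (onecell_qturn i a (svalP c)).

Definition qturn_dcell (L : Type) i (a : coord L) (c : dcell L) : dcell L :=
  exist _ (qturn_pm i a (sval c)) (dcell_qturn i a (svalP c)).

Definition qturn_cell (L : Type) (k : cubekind) (i : axis) (a : coord L)
  : cell L k -> cell L k :=
  match k return cell L k -> cell L k with
  | Edgeless => qturn_ecell i a
  | Edged => qturn_dcell i a
  end.

Inductive tpow := P1 | P2 | P3.
Definition tpow_nat (t : tpow) : nat := match t with P1 => 1 | P2 => 2 | P3 => 3 end.

Record basic (L : Type) := Basic { baxis : axis; bval : coord L; bpow : tpow }.

Definition twist_apply (L : Type) (k : cubekind) (b : basic L) (c : cell L k)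
  : cell L k :=
  iter (tpow_nat (bpow b)) (@qturn_cell L k (baxis b) (bval b)) c.

(* a labelling with values in X ∪ {NaC}; None is NaC *)
Definition labelling (L : Type) (k : cubekind) (X : Type) := cell L k -> option X.

Definition legal (L : Type) (k : cubekind) (X : Type) (f : labelling L k X) : Prop :=
  forall c, f c <> None.

Definition idlab (L : Type) (k : cubekind) : labelling L k (cell L k) :=
  fun c => Some c.

Arguments idlab L k c : clear implicits.

Inductive color := Red | White | Green | Orange | Yellow | Blue.

(* A sequence indexed by a well-ordered type (i.e. of some ordinal length). *)
Record tseq (L : Type) := BSeq {
  idx : Type;
  ilt : idx -> idx -> Prop;
  tw  : idx -> basic L }.
Arguments idx {L} t.
Arguments ilt {L} t _ _.
Arguments tw {L} t _.

Definition is_wo (I : Type) (R : I -> I -> Prop) : Prop :=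
  (forall a, ~ R a a) /\
  (forall a b c, R a b -> R b c -> R a c) /\
  (forall a b, R a b \/ a = b \/ R b a) /\
  well_founded R.

Definition basic_seq (L : Type) (s : tseq L) : Prop := is_wo (ilt s).

Definition finite_seq (L : Type) (s : tseq L) : Prop :=
  exists l : list (idx s), forall a, List.In a l.

(* positions 0..theta: Some a = position a, None = theta (the end) *)
Definition plt (L : Type) (s : tseq L) (p q : option (idx s)) : Prop :=
  match p, q with
  | Some a, Some b => ilt s a b
  | Some _, None => True
  | None, _ => False
  end.

Arguments plt {L} s p q.

Definition ple (L : Type) (s : tseq L) (p q : option (idx s)) : Prop :=
  p = q \/ plt s p q.

Arguments ple {L} s p q.

Definition evconst (L : Type) (k : cubekind) (X : Type) (s : tseq L)
  (F : option (idx s) -> labelling L k X) (p : option (idx s)) (c : cell L k)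
  (v : option X) : Prop :=
  exists q0, plt s q0 p /\ forall q, ple s q0 q -> plt s q p -> F q c = v.

Definition is_run (L : Type) (k : cubekind) (X : Type) (s : tseq L)
  (f0 : labelling L k X) (F : option (idx s) -> labelling L k X) : Prop :=
  (forall p, (forall q, ~ plt s q p) -> F p = f0) /\
  (* successor step: p = a+1, f_{a+1} = sigma_a f_a, i.e. f_{a+1}(sigma_a c) = f_a(c) *)
  (forall a p, plt s (Some a) p -> (forall q, plt s (Some a) q -> ple s p q) ->
     forall c, F p (@twist_apply L k (tw s a) c) = F (Some a) c) /\
  (forall p, (exists q, plt s q p) ->
     (forall a, plt s (Some a) p -> exists q, plt s (Some a) q /\ plt s q p) ->
     forall c,
       (forall v, evconst F p c v -> F p c = v) /\
       ((forall v, ~ evconst F p c v) -> F p c = None)).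

Arguments is_run {L k X} s f0 F.

Definition runs_to (L : Type) (k : cubekind) (X : Type) (s : tseq L)
  (f0 : labelling L k X) (g : labelling L k X) : Prop :=
  exists F, is_run s f0 F /\ F None = g.

Arguments runs_to {L k X} s f0 g.

Definition uc (L : Type) (k : cubekind) (s : tseq L) : Prop :=
  basic_seq s /\ exists g, runs_to s (idlab L k) g /\ legal g.

Arguments uc {L} k s.

Definition sim (L : Type) (k : cubekind) (s t : tseq L) : Prop :=
  forall (f : labelling L k color) (g : labelling L k color),
    runs_to s f g <-> runs_to t f g.

Arguments sim {L} k s t.

(* concatenation: bcat t s = "t s" = s followed by t *)
Definition bcat (L : Type) (t s : tseq L) : tseq L :=
  @BSeq L (idx s + idx t)%type
    (fun u v => match u, v with
                | inl a, inl b => ilt s a b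
                | inr a, inr b => ilt t a b
                | inl _, inr _ => True
                | inr _, inl _ => False
                end)
    (fun u => match u with inl a => tw s a | inr a => tw t a end).

Definition bempty (L : Type) : tseq L :=
  @BSeq L Empty_set (fun _ _ => False) (fun e => match e with end).

Fixpoint bseqpow (L : Type) (s : tseq L) (n : nat) : tseq L :=
  match n with 0 => bempty L | n'.+1 => bcat s (bseqpow s n') end.

Definition S24_lcm_order : nat := \big[lcmn/1%N]_(pi : 'S_24) #[pi]%g.

(* Main.v *)
Require Import Defs.
From mathcomp Require Import all_boot all_fingroup.
From mathcomp Require Import zify.
From Stdlib Require Import ClassicalEpsilon FunctionalExtensionality.
From Stdlib Require List.

Set Implicit Arguments.
Unset Strict Implicit.
Unset Printing Implicit Defensive.

Section Order.
Variable L : Type.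
Variable s : tseq L.
Hypothesis Hs : basic_seq s.

Lemma ilt_irr a : ~ ilt s a a.
Proof. by case: Hs. Qed.
Lemma ilt_trans a b c : ilt s a b -> ilt s b c -> ilt s a c.
Proof. by case: Hs => _ [H _]; apply: H. Qed.
Lemma ilt_total a b : ilt s a b \/ a = b \/ ilt s b a.
Proof. by case: Hs => _ [_ [H _]]. Qed.

Lemma plt_irr p : ~ plt s p p.
Proof. by case: p => [a|] //=; apply: ilt_irr. Qed.

Lemma plt_trans p q r : plt s p q -> plt s q r -> plt s p r.
Proof.
case: p => [a|]; case: q => [b|]; case: r => [c|] //=; exact: ilt_trans.
Qed.

Lemma plt_total p q : plt s p q \/ p = q \/ plt s q p.
Proof.
case: p => [a|]; case: q => [b|] /=; try by [left | right; left | right; right].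
by case: (ilt_total a b) => [h|[->|h]]; auto.
Qed.

Lemma plt_wf : well_founded (plt s).
Proof.
have HA : forall a, Acc (plt s) (Some a).
  case: Hs => _ [_ [_ Hw]] a.
  induction (Hw a) as [a _ IH]; constructor; intros [b|] hb; simpl in hb.
  - exact: IH.
  - destruct hb.
intros [a|]; first exact: HA.
constructor; intros [b|] hb; [exact: HA | destruct hb].
Qed.

Lemma plt_asym p q : plt s p q -> ~ plt s q p.
Proof. move=> h1 h2; exact: (plt_irr (plt_trans h1 h2)). Qed.

Lemma ple_trans p q r : ple s p q -> ple s q r -> ple s p r.
Proof.
rewrite /ple => h1 h2; case: h1 => [e1|h1]; first by subst.
case: h2 => [e2|h2]; first by subst; right.
by right; apply: plt_trans h1 h2.
Qed.

Lemma ple_plt_trans p q r : ple s p q -> plt s q r -> plt s p r.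
Proof. rewrite /ple => h1 h2; case: h1 => [e|h1]; first by subst. exact: plt_trans h1 h2. Qed.

Lemma plt_ple_trans p q r : plt s p q -> ple s q r -> plt s p r.
Proof. rewrite /ple => h1 h2; case: h2 => [e|h2]; first by subst. exact: plt_trans h1 h2. Qed.

Lemma ple_refl p : ple s p p.
Proof. by left. Qed.

Lemma plt_ple p q : plt s p q -> ple s p q.
Proof. by right. Qed.

Lemma ple_max p q : exists r, ple s p r /\ ple s q r /\ (r = p \/ r = q).
Proof.
case: (plt_total p q) => [h|[->|h]].
- by exists q; split; [right|split; [left|right]].
- by exists q; split; [left|split; [left|right]].
- by exists p; split; [left|split; [right|left]].
Qed.

Lemma not_ple_plt p q : ~ ple s p q -> plt s q p.
Proof.
move=> h; case: (plt_total p q) => [h'|[e|h']].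
- by exfalso; apply: h; right.
- by exfalso; apply: h; left.
- exact: h'.
Qed.

Lemma classify p :
  (forall q, ~ plt s q p) \/
  (exists a, plt s (Some a) p /\ forall q, plt s (Some a) q -> ple s p q) \/
  ((exists q, plt s q p) /\
   forall a, plt s (Some a) p -> exists q, plt s (Some a) q /\ plt s q p).
Proof.
case: (classic (exists q, plt s q p)) => [hq|hq]; last first.
  by left => q h; apply: hq; exists q.
case: (classic (exists a, plt s (Some a) p /\ forall q, plt s (Some a) q -> ple s p q)) => [h|h].
  by right; left.
right; right; split => // a ha.
apply: NNPP => hn; apply: h; exists a; split; first exact: ha.
move=> q hq'.
case: (plt_total p q) => [h1|[e|h1]].
- by right.
- by left.
- by exfalso; apply: hn; exists q.
Qed.

Lemma succ_uniq a a' p :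
  plt s (Some a) p -> (forall q, plt s (Some a) q -> ple s p q) ->
  plt s (Some a') p -> (forall q, plt s (Some a') q -> ple s p q) -> a = a'.
Proof.
move=> h1 h2 h3 h4.
case: (ilt_total a a') => [h|[->|h]] //.
- have := h2 (Some a') h => hp; exfalso; exact: plt_irr (ple_plt_trans hp h3).
- have := h4 (Some a) h => hp; exfalso; exact: plt_irr (ple_plt_trans hp h1).
Qed.

Lemma evconst_uniq k X (F : option (idx s) -> labelling L k X) p c v v' :
  evconst F p c v -> evconst F p c v' -> v = v'.
Proof.
move=> [q0 [h0 H0]] [q1 [h1 H1]].
have [r [r0 [r1 rr]]] := ple_max q0 q1.
have hr : plt s r p by case: rr => ->.
by rewrite -(H0 r r0 hr) (H1 r r1 hr).
Qed.

End Order.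

Lemma cneg_inv L (c : coord L) : cneg (cneg c) = c.
Proof. by case: c. Qed.

Lemma sig_bool_eq T (P : T -> bool) (x y : {z | P z}) : sval x = sval y -> x = y.
Proof.
case: x => x px; case: y => y py /= e; subst y.
by rewrite (bool_irrelevance px py).
Qed.

Lemma getc_rot L i (p : point L) : getc (Defs.rot i p) i = getc p i.
Proof. by case: i. Qed.

Lemma rot4 L i (p : point L) : Defs.rot i (Defs.rot i (Defs.rot i (Defs.rot i p))) = p.
Proof. by case: p => x y z; case: i => /=; rewrite !cneg_inv. Qed.

Lemma rotmark4 i j : rotmark i (rotmark i (rotmark i (rotmark i j))) = j.
Proof. by case: i; case: j. Qed.

Lemma qturn_pt_eq L i (a : coord L) p :
  qturn_pt i a p = if excluded_middle_informative (getc p i = a) then Defs.rot i p else p.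
Proof. by []. Qed.

Lemma qturn_pt_yes L i (a : coord L) p : getc p i = a -> qturn_pt i a p = Defs.rot i p.
Proof. move=> h; rewrite /qturn_pt; destruct (excluded_middle_informative _); simpl; first [reflexivity | exfalso; tauto]. Qed.
Lemma qturn_pt_no L i (a : coord L) p : getc p i <> a -> qturn_pt i a p = p.
Proof. move=> h; rewrite /qturn_pt; destruct (excluded_middle_informative _); simpl; first [reflexivity | exfalso; tauto]. Qed.
Lemma qturn_pm_yes L i (a : coord L) p : getc p.1 i = a -> qturn_pm i a p = (Defs.rot i p.1, rotmark i p.2).
Proof. move=> h; rewrite /qturn_pm; destruct (excluded_middle_informative _); simpl; first [reflexivity | exfalso; tauto]. Qed.
Lemma qturn_pm_no L i (a : coord L) p : getc p.1 i <> a -> qturn_pm i a p = p.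
Proof. move=> h; rewrite /qturn_pm; destruct (excluded_middle_informative _); simpl; first [reflexivity | exfalso; tauto]. Qed.

Lemma qturn_pt4 L i (a : coord L) p :
  qturn_pt i a (qturn_pt i a (qturn_pt i a (qturn_pt i a p))) = p.
Proof.
case: (classic (getc p i = a)) => h.
- by rewrite !qturn_pt_yes ?getc_rot // rot4.
- by rewrite !qturn_pt_no.
Qed.

Lemma qturn_pm4 L i (a : coord L) p :
  qturn_pm i a (qturn_pm i a (qturn_pm i a (qturn_pm i a p))) = p.
Proof.
case: (classic (getc p.1 i = a)) => h.
- rewrite !qturn_pm_yes /= ?getc_rot // rot4 rotmark4; by case: p {h}.
- by rewrite !qturn_pm_no.
Qed.

Lemma qturn4 L k i (a : coord L) (c : cell L k) :
  iter 4 (qturn_cell i a) c = c.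
Proof.
case: k c => c; apply: sig_bool_eq => /=.
- exact: qturn_pt4.
- exact: qturn_pm4.
Qed.

Definition twinv L k (b : basic L) (c : cell L k) : cell L k :=
  iter (4 - tpow_nat (bpow b)) (@qturn_cell L k (baxis b) (bval b)) c.

Lemma tw_inv L k (b : basic L) (c : cell L k) : twist_apply b (twinv b c) = c.
Proof.
rewrite /twist_apply /twinv -iterD.
have -> : (tpow_nat (bpow b) + (4 - tpow_nat (bpow b)) = 4)%N by case: (bpow b).
exact: qturn4.
Qed.

Lemma inv_tw L k (b : basic L) (c : cell L k) : twinv b (twist_apply b c) = c.
Proof.
rewrite /twist_apply /twinv -iterD.
have -> : ((4 - tpow_nat (bpow b)) + tpow_nat (bpow b) = 4)%N by case: (bpow b).
exact: qturn4.
Qed.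

Lemma tw_inj L k (b : basic L) (c c' : cell L k) :
  twist_apply b c = twist_apply b c' -> c = c'.
Proof. by move=> e; rewrite -(inv_tw b c) e inv_tw. Qed.

Section Exist.
Variables (L : Type) (k : cubekind) (X : Type) (s : tseq L).
Hypothesis Hs : basic_seq s.
Variable f0 : labelling L k X.

Definition step (p : option (idx s))
  (G : forall q, plt s q p -> labelling L k X) : labelling L k X := fun c =>
 match excluded_middle_informative
   (exists a, plt s (Some a) p /\ forall q, plt s (Some a) q -> ple s p q) with
 | left H => let w := constructive_indefinite_description _ H in
     G (Some (proj1_sig w)) (proj1 (proj2_sig w)) (twinv (tw s (proj1_sig w)) c)
 | right _ =>
   match excluded_middle_informative (exists q, plt s q p) with
   | left _ =>
     match excluded_middle_informative (exists v, exists q0, plt s q0 p /\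
         forall q (hq : plt s q p), ple s q0 q -> G q hq c = v) with
     | left H => proj1_sig (constructive_indefinite_description _ H)
     | right _ => None end
   | right _ => f0 c end end.

Definition Frun := Fix (plt_wf Hs) (fun _ => labelling L k X) step.

Lemma Frun_eq p : Frun p = @step p (fun q _ => Frun q).
Proof.
rewrite /Frun Fix_eq //.
move=> x f g H.
have -> : f = g; last by [].
apply: functional_extensionality_dep => y.
apply: functional_extensionality_dep => hy.
exact: H.
Qed.

Lemma run_exists : is_run s f0 Frun.
Proof.
split; [|split].
- move=> p hp; rewrite Frun_eq; apply: functional_extensionality => c.
  rewrite /step; destruct (excluded_middle_informative _) as [[a [ha hb]]|hn0].
    by exfalso; apply: (hp _ ha).
  destruct (excluded_middle_informative _) as [[q hq]|hn1]; last reflexivity.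
  by exfalso; apply: (hp _ hq).
- move=> a p h1 h2 c; rewrite Frun_eq /step.
  destruct (excluded_middle_informative _) as [H|H]; last first.
    by exfalso; apply: H; exists a.
  destruct (constructive_indefinite_description _ H) as [a' [h3 h4]]; simpl.
  have e := succ_uniq Hs h3 h4 h1 h2; subst a'.
  by rewrite inv_tw.
- move=> p hq hlim c.
  have Hns : ~ (exists a, plt s (Some a) p /\ forall q, plt s (Some a) q -> ple s p q).
    move=> [a [ha hb]]; have [q [q1 q2]] := hlim a ha.
    have hpp := ple_plt_trans Hs (hb q q1) q2. exact: (plt_irr Hs hpp).
  have E : Frun p c = match excluded_middle_informative (exists v, exists q0, plt s q0 p /\
         forall q (hq : plt s q p), ple s q0 q -> Frun q c = v) with
     | left H => proj1_sig (constructive_indefinite_description _ H)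
     | right _ => None end.
    rewrite Frun_eq /step.
    destruct (excluded_middle_informative _) as [H|hn2]; first by exfalso; apply: Hns.
    destruct (excluded_middle_informative _) as [hh|H]; first reflexivity. by exfalso; apply: H.
  rewrite E; clear E; split.
  + move=> v hv; destruct (excluded_middle_informative _) as [H|H].
      destruct (constructive_indefinite_description _ H) as [v' [q0 [hq0 Hq0]]]; simpl.
      apply: (evconst_uniq Hs _ hv); exists q0; split => // q r1 r2.
      exact: Hq0.
    exfalso; apply: H; exists v; case: hv => q0 [hq0 Hq0]; exists q0; split => //.
    move=> q r1 r2; exact: Hq0.
  + move=> hn; destruct (excluded_middle_informative _) as [H|H]; last reflexivity.
    destruct (constructive_indefinite_description _ H) as [v' [q0 [hq0 Hq0]]]; simpl.
    exfalso; apply: (hn v'); exists q0; split => // q r1 r2; exact: Hq0.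
Qed.

End Exist.

Lemma run_ex L k X (s : tseq L) (f0 : labelling L k X) :
  basic_seq s -> exists F, is_run s f0 F.
Proof. by move=> Hs; exists (Frun Hs f0); apply: run_exists. Qed.

Section Runs.
Variables (L : Type) (k : cubekind) (s : tseq L).
Hypothesis Hs : basic_seq s.

Lemma pos_ind (P : option (idx s) -> Prop) :
 (forall p, (forall q, ~ plt s q p) -> P p) ->
 (forall a p, plt s (Some a) p -> (forall q, plt s (Some a) q -> ple s p q) ->
    P (Some a) -> P p) ->
 (forall p, (exists q, plt s q p) ->
    (forall a, plt s (Some a) p -> exists q, plt s (Some a) q /\ plt s q p) ->
    (forall q, plt s q p -> P q) -> P p) ->
 forall p, P p.
Proof.
move=> H1 H2 H3 p; elim/(well_founded_ind (plt_wf Hs)): p => p IH.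
case: (classify Hs p) => [h|[[a [ha hb]]|[hq hl]]].
- exact: H1.
- exact: (H2 a p ha hb (IH _ ha)).
- exact: H3.
Qed.

Lemma lim_some X (F : option (idx s) -> labelling L k X) f0 p c d :
  is_run s f0 F -> (exists q, plt s q p) ->
  (forall a, plt s (Some a) p -> exists q, plt s (Some a) q /\ plt s q p) ->
  F p c = Some d -> evconst F p c (Some d).
Proof.
move=> [_ [_ HL]] hq hl e; have [H1 H2] := HL p hq hl c.
case: (classic (exists v, evconst F p c v)) => [[v hv]|hn].
  by rewrite -e (H1 v hv).
by exfalso; rewrite H2 in e => // v hv; apply: hn; exists v.
Qed.

Variable Fid : option (idx s) -> labelling L k (cell L k).
Hypothesis HFid : is_run s (idlab L k) Fid.

Lemma transport X (f0 : labelling L k X) F :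
  is_run s f0 F -> forall p c d, Fid p c = Some d -> F p c = f0 d.
Proof.
move=> HF; elim/pos_ind => [p hp|a p h1 h2 IH|p hq hl IH] c d.
- case: HFid => [H _]; case: HF => [H' _].
  by rewrite (H p hp) (H' p hp) => -[->].
- rewrite -(tw_inv (tw s a) c).
  case: HFid => [_ [H _]]; case: HF => [_ [H' _]].
  rewrite (H a p h1 h2) (H' a p h1 h2); exact: IH.
- move=> e; have [q0 [hq0 Hq0]] := lim_some HFid hq hl e.
  case: HF => [_ [_ HL]]; have [H1 _] := HL p hq hl c.
  apply: H1; exists q0; split => // q r1 r2.
  by apply: IH => //; apply: Hq0.
Qed.

Lemma id_inj p c c' d : Fid p c = Some d -> Fid p c' = Some d -> c = c'.
Proof.
elim/pos_ind: p c c' d => [p hp|a p h1 h2 IH|p hq hl IH] c c' d.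
- case: HFid => [H _]; rewrite (H p hp) /idlab.
  by move=> [->] [->].
- rewrite -(tw_inv (tw s a) c) -(tw_inv (tw s a) c').
  case: HFid => [_ [H _]]; rewrite !(H a p h1 h2) => e1 e2.
  by rewrite (IH _ _ _ e1 e2).
- move=> e1 e2.
  have [q0 [hq0 Hq0]] := lim_some HFid hq hl e1.
  have [q1 [hq1 Hq1]] := lim_some HFid hq hl e2.
  have [r [r0 [r1 rr]]] := ple_max Hs q0 q1.
  have hr : plt s r p by case: rr => ->.
  exact: (IH r hr c c' d (Hq0 r r0 hr) (Hq1 r r1 hr)).
Qed.

End Runs.

Record sm := SM { sa1 : axis; sa2 : axis; sa3 : axis; sb1 : bool; sb2 : bool; sb3 : bool;
  sm1 : axis; sm2 : axis; sm3 : axis }.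

Definition sg L (b : bool) (c : coord L) := if b then cneg c else c.
Definition geta (M : sm) j := match j with AX => sa1 M | AY => sa2 M | AZ => sa3 M end.
Definition getb (M : sm) j := match j with AX => sb1 M | AY => sb2 M | AZ => sb3 M end.
Definition actA (M : sm) j := match j with AX => sm1 M | AY => sm2 M | AZ => sm3 M end.
Definition actP L (M : sm) (p : point L) : point L :=
  Pt (sg (sb1 M) (getc p (sa1 M))) (sg (sb2 M) (getc p (sa2 M))) (sg (sb3 M) (getc p (sa3 M))).
Definition comp (M N : sm) : sm :=
  SM (geta N (sa1 M)) (geta N (sa2 M)) (geta N (sa3 M))
     (xorb (sb1 M) (getb N (sa1 M))) (xorb (sb2 M) (getb N (sa2 M))) (xorb (sb3 M) (getb N (sa3 M)))
     (actA M (sm1 N)) (actA M (sm2 N)) (actA M (sm3 N)).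
Definition idM := SM AX AY AZ false false false AX AY AZ.
Definition gen (i : axis) : sm :=
  match i with
  | AX => SM AX AZ AY false true false AX AZ AY
  | AY => SM AZ AY AX false false true AZ AY AX
  | AZ => SM AY AX AZ true false false AY AX AZ
  end.
Definition axeq (a b : axis) : bool :=
  match a, b with AX, AX | AY, AY | AZ, AZ => true | _, _ => false end.
Definition smeq (M N : sm) : bool :=
  [&& axeq (sa1 M) (sa1 N), axeq (sa2 M) (sa2 N), axeq (sa3 M) (sa3 N),
      sb1 M == sb1 N, sb2 M == sb2 N, sb3 M == sb3 N,
      axeq (sm1 M) (sm1 N), axeq (sm2 M) (sm2 N) & axeq (sm3 M) (sm3 N)].
Fixpoint smem (M : sm) (l : list sm) : bool :=
  match l with nil => false | N :: l => smeq M N || smem M l end.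
Fixpoint addall (l acc : list sm) : list sm :=
  match l with nil => acc | M :: l => addall l (if smem M acc then acc else M :: acc) end.
Definition clstep (l : list sm) := addall (flatten (map (fun M => [:: comp (gen AX) M; comp (gen AY) M; comp (gen AZ) M]) l)) l.
Definition G24 := iter 6 clstep [:: idM].
Arguments G24 : simpl never.

Lemma axeq_eq a b : axeq a b -> a = b.
Proof. by case: a; case: b. Qed.

Lemma smeq_eq M N : smeq M N -> M = N.
Proof.
case: M => x1 x2 x3 x4 x5 x6 x7 x8 x9; case: N => y1 y2 y3 y4 y5 y6 y7 y8 y9; rewrite /smeq /=.
move=> /andP [/axeq_eq -> /andP [/axeq_eq -> /andP [/axeq_eq -> /andP [/eqP -> /andP [/eqP ->
  /andP [/eqP -> /andP [/axeq_eq -> /andP [/axeq_eq -> /axeq_eq ->]]]]]]]].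
by [].
Qed.

Lemma smem_In M l : smem M l -> List.In M l.
Proof.
elim: l => //= N l IH /orP [/smeq_eq ->|h]; [by left | by right; apply: IH].
Qed.

Lemma G24_len : length G24 = 24.
Proof. by vm_compute. Qed.

Lemma G24_closed_b : List.forallb (fun M => List.forallb (fun N => smem (comp M N) G24) G24) G24 = true.
Proof. by vm_compute. Qed.

Lemma G24_inv_b : List.forallb (fun M => List.existsb (fun N => smeq (comp N M) idM) G24) G24 = true.
Proof. by vm_compute. Qed.

Lemma G24_comp M N : List.In M G24 -> List.In N G24 -> List.In (comp M N) G24.
Proof.
move=> hM hN.
have H1 := proj1 (List.forallb_forall (fun M => List.forallb (fun N => smem (comp M N) G24) G24) G24) G24_closed_b M hM.
have H2 := proj1 (List.forallb_forall (fun N => smem (comp M N) G24) G24) H1 N hN.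
exact (@smem_In (comp M N) G24 H2).
Qed.

Lemma G24_inv M : List.In M G24 -> exists N, List.In N G24 /\ comp N M = idM.
Proof.
move=> hM.
have H1 := proj1 (List.forallb_forall (fun M => List.existsb (fun N => smeq (comp N M) idM) G24) G24) G24_inv_b M hM.
have [N [hN e]] := proj1 (List.existsb_exists (fun N => smeq (comp N M) idM) G24) H1.
exists N; split; [exact hN | exact (@smeq_eq (comp N M) idM e)].
Qed.

Lemma G24_id : List.In idM G24.
Proof. apply smem_In; vm_compute; reflexivity. Qed.

Lemma G24_gen i : List.In (gen i) G24.
Proof. apply smem_In; case: i; vm_compute; reflexivity. Qed.

Opaque G24.

Lemma sg_sg L b b' (c : coord L) : sg b (sg b' c) = sg (xorb b b') c.
Proof. by case: b; case: b' => //=; rewrite cneg_inv. Qed.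

Lemma getc_actP L N (p : point L) j : getc (actP N p) j = sg (getb N j) (getc p (geta N j)).
Proof. by case: j. Qed.

Lemma actP_comp L M N (p : point L) : actP (comp M N) p = actP M (actP N p).
Proof. by rewrite /actP !getc_actP !sg_sg. Qed.

Lemma actA_comp M N j : actA (comp M N) j = actA M (actA N j).
Proof. by case: j. Qed.

Lemma actP_id L (p : point L) : actP idM p = p.
Proof. by case: p. Qed.

Lemma actA_id j : actA idM j = j.
Proof. by case: j. Qed.

Lemma rot_gen L i (p : point L) : Defs.rot i p = actP (gen i) p.
Proof. by case: p => x y z; case: i. Qed.

Lemma rotmark_gen i j : rotmark i j = actA (gen i) j.
Proof. by case: i; case: j. Qed.

Definition Dk L k : Type :=
  match k with Edgeless => point L | Edged => (point L * axis)%type end.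
Definition cval L k : cell L k -> Dk L k :=
  match k return cell L k -> Dk L k with
  | Edgeless => fun c => sval c | Edged => fun c => sval c end.
Definition actD L k (M : sm) : Dk L k -> Dk L k :=
  match k return Dk L k -> Dk L k with
  | Edgeless => actP M | Edged => fun pm => (actP M pm.1, actA M pm.2) end.

Lemma cval_inj L k (c c' : cell L k) : cval c = cval c' -> c = c'.
Proof. case: k c c' => c c' /=; exact: sig_bool_eq. Qed.

Lemma actD_comp L k M N (x : Dk L k) : actD (comp M N) x = actD M (actD N x).
Proof. by case: k x => [x|[p j]] /=; rewrite actP_comp // actA_comp. Qed.

Lemma actD_id L k (x : Dk L k) : actD idM x = x.
Proof. by case: k x => [x|[p j]] /=; rewrite actP_id // actA_id. Qed.

Lemma qturn_act L k i (a : coord L) (c : cell L k) :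
  exists M, List.In M G24 /\ cval (qturn_cell i a c) = actD M (cval c).
Proof.
case: k c => c /=.
- case: (classic (getc (sval c) i = a)) => h.
  + exists (gen i); split; [apply G24_gen|]. by rewrite qturn_pt_yes // rot_gen.
  + exists idM; split; [apply G24_id|]. by rewrite qturn_pt_no // actP_id.
- case: (classic (getc (sval c).1 i = a)) => h.
  + exists (gen i); split; [apply G24_gen|]. by rewrite qturn_pm_yes // rot_gen rotmark_gen.
  + exists idM; split; [apply G24_id|]. by rewrite qturn_pm_no // actP_id actA_id; case: (sval c).
Qed.

Lemma iter_act L k i (a : coord L) n (c : cell L k) :
  exists M, List.In M G24 /\ cval (iter n (qturn_cell i a) c) = actD M (cval c).
Proof.
elim: n => [|n [M [hM e]]] /=.
  exists idM; split; [apply G24_id|]. by rewrite actD_id.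
have [M' [hM' e']] := qturn_act i a (iter n (qturn_cell i a) c).
exists (comp M' M); split; [apply G24_comp; [exact hM' | exact hM]|].
by rewrite e' e actD_comp.
Qed.

Lemma twist_act L k (b : basic L) (c : cell L k) :
  exists M, List.In M G24 /\ cval (twist_apply b c) = actD M (cval c).
Proof. exact: iter_act. Qed.

Lemma id_class L k (s : tseq L) (Hs : basic_seq s) Fid :
  is_run s (idlab L k) Fid ->
  forall p c d, Fid p c = Some d -> exists M, List.In M G24 /\ cval c = actD M (cval d).
Proof.
move=> HFid; elim/(pos_ind Hs) => [p hp|a p h1 h2 IH|p hq hl IH] c d.
- case: HFid => [H _]; rewrite (H p hp) /idlab => -[<-].
  exists idM; split; [apply G24_id|]. by rewrite actD_id.
- rewrite -(tw_inv (tw s a) c).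
  case: HFid => [_ [H _]]; rewrite (H a p h1 h2) => e.
  have [M [hM eM]] := IH _ _ e.
  have [M' [hM' eM']] := twist_act (tw s a) (twinv (tw s a) c).
  exists (comp M' M); split; [apply G24_comp; [exact hM' | exact hM]|].
  by rewrite eM' eM actD_comp.
- move=> e; have [q0 [hq0 Hq0]] := lim_some HFid hq hl e.
  exact (IH q0 hq0 c d (Hq0 q0 (ple_refl q0) hq0)).
Qed.

Lemma evc_transfer L k X (s' u' : tseq L) (Hu : basic_seq u')
  (F : option (idx u') -> labelling L k X) (G : option (idx s') -> labelling L k X)
  (m : option (idx s') -> option (idx u')) p p' c v :
 (forall x, plt s' x p' -> plt u' (m x) p) ->
 (forall x y, ple u' (m x) (m y) -> ple s' x y) ->
 (forall x y, ple s' x y -> ple u' (m x) (m y)) ->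
 (forall q, plt u' q p -> exists x, plt s' x p' /\ ple u' q (m x)) ->
 (forall x q, plt s' x p' -> ple u' (m x) q -> plt u' q p ->
    exists y, plt s' y p' /\ q = m y) ->
 (forall x, plt s' x p' -> F (m x) c = G x c) ->
 evconst F p c v <-> evconst G p' c v.
Proof.
move=> H1 H2 H3 H4 H5 H6; split.
- move=> [q0 [h0 E0]]; have [x0 [hx0 ex0]] := H4 q0 h0.
  exists x0; split; first exact: hx0.
  move=> x r1 r2; rewrite -(H6 x r2); apply: E0; last exact: H1.
  exact: (ple_trans Hu ex0 (H3 _ _ r1)).
- move=> [x0 [h0 E0]]; exists (m x0); split; first exact: H1.
  move=> q r1 r2; have [y [hy ey]] := H5 x0 q h0 r1 r2; subst q.
  rewrite (H6 y hy); apply: E0; [exact: (H2 _ _ r1) | exact: hy].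
Qed.

Lemma lim_transfer L k X (s' u' : tseq L)
  (F : option (idx u') -> labelling L k X) (G : option (idx s') -> labelling L k X) p p' c :
  (forall v, evconst F p c v <-> evconst G p' c v) -> F p c = G p' c ->
  ((forall v, evconst G p' c v -> G p' c = v) /\ ((forall v, ~ evconst G p' c v) -> G p' c = None)) ->
  ((forall v, evconst F p c v -> F p c = v) /\ ((forall v, ~ evconst F p c v) -> F p c = None)).
Proof.
move=> E e [H1 H2]; rewrite e; split.
- by move=> v /E; apply: H1.
- by move=> hn; apply: H2 => v /E; apply: hn.
Qed.

Section Cat.
Variables (L : Type) (s t : tseq L).
Hypotheses (Hs : basic_seq s) (Ht : basic_seq t).

Lemma bcat_wo : basic_seq (bcat t s).
Proof.
split; [|split; [|split]].
- by case=> a /=; apply: ilt_irr.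
- case=> [a|a] [b|b] [c|c] //=; by apply: ilt_trans.
- case=> [a|a] [b|b] /=; try by [left|right; right].
  + by case: (ilt_total Hs a b) => [h|[->|h]]; auto.
  + by case: (ilt_total Ht a b) => [h|[->|h]]; auto.
- have HA : forall a, Acc (ilt (bcat t s)) (inl a).
    case: Hs => _ [_ [_ Hw]] a.
    induction (Hw a) as [a _ IH]; constructor; intros [b|b] hb; simpl in hb.
    + exact: IH.
    + destruct hb.
  case: Ht => _ [_ [_ Hw]]; intros [a|b]; first exact: HA.
  induction (Hw b) as [b _ IH]; constructor; intros [a|b'] hb; simpl in hb.
  + exact: HA.
  + exact: IH.
Qed.

Definition mS (x : option (idx s)) : option (idx (bcat t s)) :=
  match x with Some a => Some (inl a) | None => None end.
Definition mT (x : option (idx t)) : option (idx (bcat t s)) :=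
  match x with Some a => Some (inr a) | None => None end.

Lemma mS_mono x y : ple s x y -> ple (bcat t s) (mS x) (mS y).
Proof.
case: x => [a|]; case: y => [b|] /=; rewrite /ple /=.
- by case=> [[->]|h]; [left|right].
- by move=> _; right.
- by case=> [|[]].
- by move=> _; left.
Qed.

Lemma mS_refl x y : ple (bcat t s) (mS x) (mS y) -> ple s x y.
Proof.
case: x => [a|]; case: y => [b|] /=; rewrite /ple /=.
- by case=> [[->]|h]; [left|right].
- by move=> _; right.
- by case=> [|[]].
- by move=> _; left.
Qed.

Lemma mT_mono x y : ple t x y -> ple (bcat t s) (mT x) (mT y).
Proof.
case: x => [a|]; case: y => [b|] /=; rewrite /ple /=.
- by case=> [[->]|h]; [left|right].
- by move=> _; right.
- by case=> [|[]].
- by move=> _; left.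
Qed.

Lemma mT_refl x y : ple (bcat t s) (mT x) (mT y) -> ple t x y.
Proof.
case: x => [a|]; case: y => [b|] /=; rewrite /ple /=.
- by case=> [[->]|h]; [left|right].
- by move=> _; right.
- by case=> [|[]].
- by move=> _; left.
Qed.

Variables (k : cubekind) (X : Type).

Definition catF (Fs : option (idx s) -> labelling L k X)
  (Ft : option (idx t) -> labelling L k X) : option (idx (bcat t s)) -> labelling L k X :=
  fun q => match q with
  | Some (inl a) => Fs (Some a) | Some (inr b) => Ft (Some b) | None => Ft None end.

Lemma ple_u_false_r a b : ~ ple (bcat t s) (Some (inr b)) (Some (inl a)).
Proof. by rewrite /ple /=; case. Qed.
Lemma ple_u_false_N a : ~ ple (bcat t s) None (Some a).
Proof. by rewrite /ple /=; case. Qed.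

Lemma cat_run f Fs Ft : is_run s f Fs -> is_run t (Fs None) Ft ->
  is_run (bcat t s) f (catF Fs Ft).
Proof.
move=> [S1 [S2 S3]] [T1 [T2 T3]].
have Hu := bcat_wo.
split; [|split].
-
  move=> p; case: p => [[a|b]|] hp /=.
  + apply: S1 => q; case: q => [a'|] h; [exact: (hp (Some (inl a')) h) | exact: h].
  + have e : Ft (Some b) = Fs None.
      apply: T1 => q; case: q => [b'|] h; [exact: (hp (Some (inr b')) h) | exact: h].
    rewrite e; apply: S1 => q; case: q => [a'|] h; [exact: (hp (Some (inl a')) I) | exact: h].
  + have e : Ft None = Fs None.
      apply: T1 => q; case: q => [b'|] h; [exact: (hp (Some (inr b')) I) | exact: h].
    rewrite e; apply: S1 => q; case: q => [a'|] h; [exact: (hp (Some (inl a')) I) | exact: h].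
-
  move=> a' p h1 h2 c.
  case: a' h1 h2 => [a|b] h1 h2; case: p h1 h2 => [[a2|b2]|] h1 h2 /=.
  + apply: (S2 a (Some a2) h1) => q hq; apply: mS_refl; apply: (h2 (mS q)).
    by case: q hq => [a3|] hq.
  + have e : Ft (Some b2) = Fs None.
      apply: T1 => q hq; case: q hq => [b'|] hq; last exact: hq.
      case: (h2 (Some (inr b')) I) => [e'|h'].
      * injection e' => e''; subst b'; exact: (ilt_irr Ht hq).
      * exact: (ilt_irr Ht (ilt_trans Ht hq h')).
    rewrite e; apply: (S2 a None I) => q hq; case: q hq => [a3|] hq; last by left.
    exfalso; exact: (ple_u_false_r (h2 (Some (inl a3)) hq)).
  + have e : Ft None = Fs None.
      apply: T1 => q hq; case: q hq => [b'|] hq; last exact: hq.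
      exfalso; exact: (ple_u_false_N (h2 (Some (inr b')) I)).
    rewrite e; apply: (S2 a None I) => q hq; case: q hq => [a3|] hq; last by left.
    exfalso; exact: (ple_u_false_N (h2 (Some (inl a3)) hq)).
  + by case: h1.
  + apply: (T2 b (Some b2) h1) => q hq; apply: mT_refl; apply: (h2 (mT q)).
    by case: q hq => [b3|] hq.
  + apply: (T2 b None I) => q hq; apply: mT_refl; apply: (h2 (mT q)).
    by case: q hq => [b3|] hq.
-
  move=> p hq hl c.
  case: p hq hl => [[a|b]|] hq hl.
  + apply: (@lim_transfer _ _ _ _ _ (catF Fs Ft) Fs _ (Some a) c).
    * move=> v; apply: (@evc_transfer _ _ _ _ _ Hu _ _ mS).
      -- by move=> [a'|] hx.
      -- exact: mS_refl.
      -- exact: mS_mono.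
      -- move=> q hq'; case: q hq' => [[a'|b']|] hq' //=.
         by exists (Some a'); split; [exact: hq' | left].
      -- move=> x q hx hxq hqp; case: q hxq hqp => [[a'|b']|] hxq hqp //=.
         by exists (Some a'); split.
      -- by move=> [a'|] hx.
    * reflexivity.
    * apply: S3.
      -- case: hq => q; case: q => [[a'|b']|] h //=; by exists (Some a').
      -- move=> a' ha'; have [q [q1 q2]] := hl (inl a') ha'.
         case: q q1 q2 => [[a3|b3]|] q1 q2 //=; by exists (Some a3).
  + case: (classic (exists b', ilt t b' b)) => [[b0 hb0]|hnb].
    * apply: (@lim_transfer _ _ _ _ _ (catF Fs Ft) Ft _ (Some b) c).
      -- move=> v; apply: (@evc_transfer _ _ _ _ _ Hu _ _ mT).
         ++ by move=> [b'|] hx.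
         ++ exact: mT_refl.
         ++ exact: mT_mono.
         ++ move=> q hq'; case: q hq' => [[a'|b']|] hq' //=.
            ** by exists (Some b0); split; [exact: hb0 | right].
            ** by exists (Some b'); split; [exact: hq' | left].
         ++ move=> x q hx hxq hqp; case: x hx hxq => [b1|] hx hxq //.
            case: q hxq hqp => [[a'|b']|] hxq hqp //=.
            ** by exfalso; apply: (ple_u_false_r hxq).
            ** by exists (Some b'); split.
         ++ by move=> [b'|] hx.
      -- reflexivity.
      -- apply: T3.
         ++ by exists (Some b0).
         ++ move=> b' hb'; have [q [q1 q2]] := hl (inr b') hb'.
            case: q q1 q2 => [[a3|b3]|] q1 q2 //=; by exists (Some b3).
    * have e : Ft (Some b) = Fs None.
        apply: T1 => q; case: q => [b'|] h; last exact: h.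
        by apply: hnb; exists b'.
      apply: (@lim_transfer _ _ _ _ _ (catF Fs Ft) Fs _ None c).
      -- move=> v; apply: (@evc_transfer _ _ _ _ _ Hu _ _ mS).
         ++ by move=> [a'|] hx.
         ++ exact: mS_refl.
         ++ exact: mS_mono.
         ++ move=> q hq'; case: q hq' => [[a'|b']|] hq' //=.
            ** by exists (Some a'); split; [exact: I | left].
            ** by exfalso; apply: hnb; exists b'.
         ++ move=> x q hx hxq hqp; case: q hxq hqp => [[a'|b']|] hxq hqp //=.
            ** by exists (Some a'); split.
            ** by exfalso; apply: hnb; exists b'.
         ++ by move=> [a'|] hx.
      -- by rewrite /= e.
      -- apply: S3.
         ++ case: hq => q; case: q => [[a'|b']|] h //=.
            ** by exists (Some a').
            ** by exfalso; apply: hnb; exists b'.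
         ++ move=> a' ha'; have [q [q1 q2]] := hl (inl a') I.
            case: q q1 q2 => [[a3|b3]|] q1 q2 //=.
            ** by exists (Some a3).
            ** by exfalso; apply: hnb; exists b3.
  + case: (classic (exists b0 : idx t, True)) => [[b0 _]|hnt].
    * apply: (@lim_transfer _ _ _ _ _ (catF Fs Ft) Ft _ None c).
      -- move=> v; apply: (@evc_transfer _ _ _ _ _ Hu _ _ mT).
         ++ by move=> [b'|] hx.
         ++ exact: mT_refl.
         ++ exact: mT_mono.
         ++ move=> q hq'; case: q hq' => [[a'|b']|] hq' //=.
            ** by exists (Some b0); split; [exact: I | right].
            ** by exists (Some b'); split; [exact: I | left].
         ++ move=> x q hx hxq hqp; case: x hx hxq => [b1|] hx hxq //.
            case: q hxq hqp => [[a'|b']|] hxq hqp //=.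
            ** by exfalso; apply: (ple_u_false_r hxq).
            ** by exists (Some b'); split.
         ++ by move=> [b'|] hx.
      -- reflexivity.
      -- apply: T3.
         ++ by exists (Some b0).
         ++ move=> b' hb'; have [q [q1 q2]] := hl (inr b') I.
            case: q q1 q2 => [[a3|b3]|] q1 q2 //=; by exists (Some b3).
    * have e : Ft None = Fs None.
        apply: T1 => q; case: q => [b'|] h; last exact: h.
        by exfalso; apply: hnt; exists b'.
      apply: (@lim_transfer _ _ _ _ _ (catF Fs Ft) Fs _ None c).
      -- move=> v; apply: (@evc_transfer _ _ _ _ _ Hu _ _ mS).
         ++ by move=> [a'|] hx.
         ++ exact: mS_refl.
         ++ exact: mS_mono.
         ++ move=> q hq'; case: q hq' => [[a'|b']|] hq' //=.
            ** by exists (Some a'); split; [exact: I | left].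
            ** by exfalso; apply: hnt; exists b'.
         ++ move=> x q hx hxq hqp; case: q hxq hqp => [[a'|b']|] hxq hqp //=.
            ** by exists (Some a'); split.
            ** by exfalso; apply: hnt; exists b'.
         ++ by move=> [a'|] hx.
      -- by rewrite /= e.
      -- apply: S3.
         ++ case: hq => q; case: q => [[a'|b']|] h //=.
            ** by exists (Some a').
            ** by exfalso; apply: hnt; exists b'.
         ++ move=> a' ha'; have [q [q1 q2]] := hl (inl a') I.
            case: q q1 q2 => [[a3|b3]|] q1 q2 //=.
            ** by exists (Some a3).
            ** by exfalso; apply: hnt; exists b3.
Qed.

End Cat.

Definition ucdata L k (s : tseq L) (pi : cell L k -> cell L k) : Prop :=
  basic_seq s /\ exists Fid, is_run s (idlab L k) Fid /\ forall c, Fid None c = Some (pi c).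

Lemma uc_data L k (s : tseq L) : uc k s -> exists pi : cell L k -> cell L k, ucdata s pi.
Proof.
move=> [Hs [g [[F [HF eF]] Hg]]].
exists (fun c => match g c with Some d => d | None => c end).
split; first exact: Hs.
exists F; split; first exact: HF.
move=> c; rewrite eF; case e: (g c) => [d|] //.
by exfalso; apply: (Hg c).
Qed.

Lemma data_uc L k (s : tseq L) (pi : cell L k -> cell L k) : ucdata s pi -> uc k s.
Proof.
move=> [Hs [F [HF eF]]]; split; first exact: Hs.
exists (F None); split; first by exists F.
by move=> c; rewrite eF.
Qed.

Lemma data_ext L k (s : tseq L) (pi pi' : cell L k -> cell L k) : ucdata s pi -> (forall c, pi c = pi' c) ->
  @ucdata L k s pi'.
Proof.
move=> [Hs [F [HF eF]]] e; split; first exact: Hs.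
by exists F; split => // c; rewrite eF e.
Qed.

Lemma data_runs L k X (s : tseq L) (pi : cell L k -> cell L k) (f g : labelling L k X) :
  ucdata s pi -> (runs_to s f g <-> g = fun c => f (pi c)).
Proof.
move=> [Hs [Fid [HFid eF]]].
have H : forall F, is_run s f F -> F None = fun c => f (pi c).
  move=> F HF; apply: functional_extensionality => c.
  exact: (transport Hs HFid HF (eF c)).
split.
- move=> [F [HF <-]]; exact: H.
- move=> ->; have [F HF] := run_ex f Hs.
  by exists F; split => //; apply: H.
Qed.

Lemma data_cat L k (s t : tseq L) (ps pt : cell L k -> cell L k) : ucdata s ps -> ucdata t pt ->
  @ucdata L k (bcat t s) (fun c => ps (pt c)).
Proof.
move=> [Hs [Fs [HFs eFs]]] [Ht [Fti [HFti eFti]]].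
split; first exact: bcat_wo.
have [Ft HFt] := run_ex (Fs None) Ht.
exists (catF Fs Ft); split; first exact: cat_run.
move=> c /=.
by rewrite (transport Ht HFti HFt (eFti c)) eFs.
Qed.

Lemma empty_wo L : basic_seq (bempty L).
Proof.
split; [|split; [|split]].
- by case.
- by case.
- by case.
- by case.
Qed.

Lemma data_empty L k : @ucdata L k (bempty L) (fun c => c).
Proof.
split; first exact: empty_wo.
exists (fun _ => idlab L k); split; last by [].
split; [|split].
- by [].
- by case.
- move=> p [q hq]; exfalso; case: q hq => [[]|]; case: p => [[]|] //.
Qed.

Lemma data_pow L k (s : tseq L) (pi : cell L k -> cell L k) : ucdata s pi ->
  forall n, @ucdata L k (bseqpow s n) (iter n pi).
Proof.
move=> H; elim=> [|n IH] /=; first exact: data_empty.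
apply: (data_ext (data_cat IH H)) => c.
by rewrite iterSr.
Qed.

Lemma sim_iff L k (s t : tseq L) (ps pt : cell L k -> cell L k) : ucdata s ps -> ucdata t pt ->
  (@sim L k s t <-> forall f : labelling L k color,
      (fun c => f (ps c)) = (fun c => f (pt c))).
Proof.
move=> Hs Ht; split.
- move=> H f; have := proj1 (H f (fun c => f (ps c))).
  rewrite (data_runs _ _ Hs) (data_runs _ _ Ht).
  by move=> ->.
- move=> H f g; rewrite (data_runs _ _ Hs) (data_runs _ _ Ht) H.
  by [].
Qed.

Lemma sim_eq L k (s t : tseq L) (ps pt : cell L k -> cell L k) : ucdata s ps -> ucdata t pt ->
  (forall c, ps c = pt c) -> @sim L k s t.
Proof.
move=> Hs Ht e; apply/(sim_iff Hs Ht) => f.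
by apply: functional_extensionality => c; rewrite e.
Qed.

Lemma dvd_N d : (0 < d <= 24)%N -> (d %| S24_lcm_order)%N.
Proof.
move=> /andP [d0 d24].
have hm : forall m, (m.+1 %% d < 24)%N.
  by move=> m; apply: leq_trans (ltn_pmod _ d0) d24.
pose f (i : 'I_24) : 'I_24 := if (i < d)%N then inord ((i.+1) %% d) else i.
have finj : injective f.
  move=> i j; rewrite /f.
  case: ifP => hi; case: ifP => hj => e; apply: val_inj => /=.
  - move: e => /(congr1 val) /=; rewrite !inordK // => e.
    have : i = j %[mod d].
      by apply/eqP; rewrite -(eqn_modDr 1) !addn1; apply/eqP.
    by rewrite !modn_small.
  - move: e => /(congr1 val) /=; rewrite inordK // => e.
    by move: (ltn_pmod i.+1 d0); rewrite e hj.
  - move: e => /(congr1 val) /=; rewrite inordK // => e.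
    by move: (ltn_pmod j.+1 d0); rewrite -e hi.
  - by rewrite e.
pose sigma : 'S_24 := perm finj.
have hit : forall j, (nat_of_ord (iter j sigma ord0) = j %% d)%N.
  elim=> [|j IH]; first by rewrite mod0n.
  rewrite iterS permE /f IH ltn_pmod // inordK; last exact: hm.
  by rewrite -addn1 modnDml addn1.
have hd : (d %| #[sigma]%g)%N.
  have := hit #[sigma]%g; rewrite -permX expg_order perm1 /= => e.
  by rewrite /dvdn -e.
apply: dvdn_trans hd _; rewrite /S24_lcm_order.
by apply: (biglcmn_sup sigma).
Qed.

Lemma N_gt0 : (0 < S24_lcm_order)%N.
Proof.
rewrite /S24_lcm_order; apply: (big_ind (fun n => 0 < n)%N);
  [done | move=> x y hx hy; by rewrite lcmn_gt0 hx hy | move=> i _; exact: order_gt0].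
Qed.

Section Period.
Variables (L : Type) (k : cubekind) (s : tseq L) (pi : cell L k -> cell L k).
Hypothesis H : ucdata s pi.

Lemma pi_inj c c' : pi c = pi c' -> c = c'.
Proof.
case: H => Hs [Fid [HFid eF]] e.
have e1 := eF c; have e2 := eF c'; rewrite -e in e2.
exact: (id_inj Hs HFid e1 e2).
Qed.

Lemma iter_inj j x y : iter j pi x = iter j pi y -> x = y.
Proof. elim: j => [|j IH] //= e; apply: IH; exact: pi_inj. Qed.

Lemma pi_act c : exists M, List.In M G24 /\ cval (pi c) = actD M (cval c).
Proof.
case: H => Hs [Fid [HFid eF]].
have [M [hM e]] := id_class Hs HFid (eF c).
have [N [hN eN]] := G24_inv hM.
exists N; split; [exact hN|].
by rewrite e -actD_comp eN actD_id.
Qed.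

Lemma iter_pi_act j c : exists M, List.In M G24 /\ cval (iter j pi c) = actD M (cval c).
Proof.
elim: j => [|j [M [hM e]]] /=.
  exists idM; split; [apply G24_id|]. by rewrite actD_id.
have [M' [hM' e']] := pi_act (iter j pi c).
exists (comp M' M); split; [apply G24_comp; [exact hM' | exact hM]|].
by rewrite e' e actD_comp.
Qed.

Lemma period c : exists d, (0 < d <= 24)%N /\ iter d pi c = c.
Proof.
apply: NNPP => hn.
have H1 : forall d, (0 < d <= 24)%N -> iter d pi c <> c.
  by move=> d hd e; apply: hn; exists d.
pose l := List.map (fun j => cval (iter j pi c)) (List.seq 0 25).
pose l' := List.map (fun M => actD M (cval c)) G24.
have hinc : List.incl l l'.
  move=> x /List.in_map_iff [j [<- _]].
  have [M [hM e]] := iter_pi_act j c; rewrite e.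
  exact (List.in_map (fun M => actD M (cval c)) G24 M hM).
have hnd : List.NoDup l.
  apply: List.NoDup_map_NoDup_ForallPairs; last exact: List.seq_NoDup.
  move=> i j /List.in_seq hi /List.in_seq hj /cval_inj e.
  case: (ltngtP i j) => h; last exact: h.
  - exfalso.
    have hij : (i <= j)%N := ltnW h.
    have e2 : iter j pi c = iter i pi (iter (j - i) pi c).
      rewrite -iterD (subnKC hij); reflexivity.
    rewrite e2 in e; have e3 := iter_inj e.
    by apply: (H1 (j - i)); [lia | rewrite -e3].
  - exfalso.
    have hij : (j <= i)%N := ltnW h.
    have e2 : iter i pi c = iter j pi (iter (i - j) pi c).
      rewrite -iterD (subnKC hij); reflexivity.
    rewrite e2 in e; have e3 := iter_inj e.
    by apply: (H1 (i - j)); [lia | rewrite e3].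
have hl : length l = 25 by rewrite /l List.length_map List.length_seq.
have hl' : length l' = 24.
  rewrite /l' List.length_map; exact G24_len.
have := List.NoDup_incl_length hnd hinc.
rewrite hl hl'.
lia.
Qed.

Lemma iterN c : iter S24_lcm_order pi c = c.
Proof.
have [d [hd e]] := period c.
rewrite -(divnK (dvd_N hd)).
elim: (S24_lcm_order %/ d)%N => [|m IH]; first by rewrite mul0n.
by rewrite mulSn iterD IH e.
Qed.

End Period.

Lemma finite_no_limit L (s : tseq L) (Hs : basic_seq s) (Hf : finite_seq s) p :
  (exists q, plt s q p) ->
  (forall a, plt s (Some a) p -> exists q, plt s (Some a) q /\ plt s q p) -> False.
Proof.
case: Hf => l hl [q hq] hlim.
have hmax : forall l', (exists a, List.In a l' /\ plt s (Some a) p) ->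
   exists a, plt s (Some a) p /\
     forall b, List.In b l' -> plt s (Some b) p -> ilt s b a \/ b = a.
  elim=> [|x l' IH] [a [ha hap]]; first by case: ha.
  case: (classic (exists b, List.In b l' /\ plt s (Some b) p)) => [hex|hnex].
  - have [a' [ha' hmx]] := IH hex.
    case: (classic (plt s (Some x) p)) => hx.
    + case: (ilt_total Hs x a') => [h|[e|h]].
      * exists a'; split; first exact: ha'.
        move=> b [e'|hb] hbp; [subst b; by left | exact: hmx].
      * exists a'; split; first exact: ha'.
        move=> b [e'|hb] hbp; [subst b; by right | exact: hmx].
      * exists x; split; first exact: hx.
        move=> b [e'|hb] hbp; first by subst b; right.
        case: (hmx b hb hbp) => [h'|e'].
        -- left; exact: (ilt_trans Hs h' h).
        -- subst b; by left.
    + exists a'; split; first exact: ha'.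
      move=> b [e'|hb] hbp; [subst b; by exfalso; apply: hx | exact: hmx].
  - case: ha => [e|ha]; last by exfalso; apply: hnex; exists a.
    subst x; exists a; split; first exact: hap.
    move=> b [e'|hb] hbp; first by subst b; right.
    by exfalso; apply: hnex; exists b.
case: q hq => [a0|] hq; last by case: hq.
have [a [hap hmx]] := hmax l (ex_intro _ a0 (conj (hl a0) hq)).
have [q [q1 q2]] := hlim a hap.
case: q q1 q2 => [b|] q1 q2; last by case: q2.
case: (hmx b (hl b) q2) => [h|e].
- exact: (ilt_irr Hs (ilt_trans Hs q1 h)).
- subst b; exact: (ilt_irr Hs q1).
Qed.

Lemma finite_uc L k (s : tseq L) : basic_seq s -> finite_seq s -> uc k s.
Proof.
move=> Hs Hf; have [F HF] := run_ex (idlab L k) Hs.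
split; first exact: Hs.
exists (F None); split; first by exists F.
suff : forall p c, F p c <> None by move=> h c; apply: h.
elim/(pos_ind Hs) => [p hp|a p h1 h2 IH|p hq hl IH] c.
- case: HF => [H _]; by rewrite (H p hp).
- rewrite -(tw_inv (tw s a) c); case: HF => [_ [H _]]; rewrite (H a p h1 h2); exact: IH.
- exfalso; exact: (finite_no_limit Hs Hf hq hl).
Qed.

Lemma finite_cat L (s t : tseq L) : finite_seq s -> finite_seq t -> finite_seq (bcat t s).
Proof.
case=> ls hs; case=> lt ht.
exists (List.map inl ls ++ List.map inr lt).
move=> [a|b]; apply: List.in_or_app; [left|right]; apply: List.in_map; [exact: hs | exact: ht].
Qed.

Lemma pow_wo L (s : tseq L) n : basic_seq s -> basic_seq (bseqpow s n).
Proof. move=> Hs; elim: n => [|n IH] /=; [exact: empty_wo | exact: bcat_wo]. Qed.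

Lemma pow_finite L (s : tseq L) n : finite_seq s -> finite_seq (bseqpow s n).
Proof.
move=> Hf; elim: n => [|n IH] /=; last exact: finite_cat.
by exists nil; case.
Qed.

Unset Implicit Arguments.

Theorem lemma3p8 (L : Type) (HL : infinite_type L) (k : cubekind) :
  (* uc_L is closed under concatenation *)
  (forall s t : tseq L, uc k s -> uc k t -> uc k (bcat t s)) /\
  (* ~ is a congruence for concatenation on uc_L *)
  (forall s s' t t' : tseq L, uc k s -> uc k s' -> uc k t -> uc k t' ->
     sim k s s' -> sim k t t' -> sim k (bcat t s) (bcat t' s')) /\
  (* associativity *)
  (forall s t u : tseq L, uc k s -> uc k t -> uc k u ->
     sim k (bcat u (bcat t s)) (bcat (bcat u t) s)) /\
  (* identity *)
  uc k (bempty L) /\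
  (forall s : tseq L, uc k s ->
     sim k (bcat (bempty L) s) s /\ sim k (bcat s (bempty L)) s) /\
  (* inverses *)
  (forall s : tseq L, uc k s -> exists t : tseq L,
     uc k t /\ sim k (bcat t s) (bempty L) /\ sim k (bcat s t) (bempty L)) /\
  (* G_L is a subgroup: finite basic sequences are universally convergent,
     and are closed under concatenation and inverses *)
  (forall s : tseq L, basic_seq s -> finite_seq s -> uc k s) /\
  (forall s t : tseq L, basic_seq s -> finite_seq s -> basic_seq t -> finite_seq t ->
     finite_seq (bcat t s)) /\
  (forall s : tseq L, basic_seq s -> finite_seq s -> exists t : tseq L,
     basic_seq t /\ finite_seq t /\
     sim k (bcat t s) (bempty L) /\ sim k (bcat s t) (bempty L)) /\
  (* every element of UC_L has order at most lcm{ord pi : pi in S_24} *)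
  (forall s : tseq L, uc k s -> exists n : nat,
     (1 <= n <= S24_lcm_order)%N /\ sim k (bseqpow s n) (bempty L)).
Proof.
have Npos := N_gt0.
have inv : forall s : tseq L, forall ps : cell L k -> cell L k, ucdata s ps ->
    sim k (bcat (bseqpow s S24_lcm_order.-1) s) (bempty L) /\
    sim k (bcat s (bseqpow s S24_lcm_order.-1)) (bempty L).
  move=> s ps Hps; have Hp := data_pow Hps S24_lcm_order.-1.
  split.
  - apply: (sim_eq (data_cat Hps Hp) (data_empty L k)) => c /=.
    rewrite -iterS prednK; [exact: (iterN Hps c) | exact: Npos].
  - apply: (sim_eq (data_cat Hp Hps) (data_empty L k)) => c /=.
    rewrite -iterSr prednK; [exact: (iterN Hps c) | exact: Npos].
split.
  move=> s t hs ht; have [ps Hps] := uc_data hs; have [pt Hpt] := uc_data ht.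
  exact: (data_uc (data_cat Hps Hpt)).
split.
  move=> s s' t t' hs hs' ht ht' H1 H2.
  have [ps Hs] := uc_data hs; have [ps' Hs'] := uc_data hs'.
  have [pt Ht] := uc_data ht; have [pt' Ht'] := uc_data ht'.
  apply/(sim_iff (data_cat Hs Ht) (data_cat Hs' Ht')) => f.
  have E1 := proj1 (sim_iff Hs Hs') H1 f.
  have E2 := proj1 (sim_iff Ht Ht') H2 (fun d => f (ps d)).
  transitivity (fun c => f (ps (pt' c))); first exact: E2.
  apply: functional_extensionality => c.
  exact: (congr1 (fun h => h (pt' c)) E1).
split.
  move=> s t u hs ht hu.
  have [ps Hs] := uc_data hs; have [pt Ht] := uc_data ht; have [pu Hu] := uc_data hu.
  by apply: (sim_eq (data_cat (data_cat Hs Ht) Hu) (data_cat Hs (data_cat Ht Hu))).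
split; first exact: (data_uc (data_empty L k)).
split.
  move=> s hs; have [ps Hps] := uc_data hs; split.
  - by apply: (sim_eq (data_cat Hps (data_empty L k)) Hps).
  - by apply: (sim_eq (data_cat (data_empty L k) Hps) Hps).
split.
  move=> s hs; have [ps Hps] := uc_data hs.
  exists (bseqpow s S24_lcm_order.-1); split.
    exact: (data_uc (data_pow Hps S24_lcm_order.-1)).
  exact: (inv s ps Hps).
split.
  move=> s hb hf; exact: finite_uc.
split.
  move=> s t _ hfs _ hft; exact: finite_cat.
split.
  move=> s hb hf; have hs := @finite_uc L k s hb hf; have [ps Hps] := uc_data hs.
  exists (bseqpow s S24_lcm_order.-1); split; first exact: pow_wo.
  split; first exact: pow_finite.
  exact: (inv s ps Hps).
move=> s hs; have [ps Hps] := uc_data hs.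
exists S24_lcm_order; split; first by rewrite Npos leqnn.
apply: (sim_eq (data_pow Hps S24_lcm_order) (data_empty L k)) => c.
exact: (iterN Hps c).
Qed.
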